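(* Let $\mathcal{A}$ be an Ershov $\mathcal{C}$-algebra. Then $\mathcal{A}$ is equationally Noetherian if and only if the subalgebra $\mathcal{C}$ is finite.
   Context: An Ershov algebra is a structure $\langle A; \vee, \wedge, \setminus, 0\rangle$ such that $\langle A;\vee,\wedge\rangle$ is a distributive lattice with least element $0$, and $b \setminus a$ is the relative complement: the unique $z$ with $z \wedge a = 0$ and $z \vee a = a \vee b$. An Ershov $\mathcal{C}$-algebra is an Ershov algebra $\mathcal{A}$ together with a distinguished subalgebra $\mathcal{C}$ whose elements are added as constant symbols; $\mathcal{L}$ is the language $\{\vee,\wedge,\setminus,0\}$ plus these constants. An equation in variables $\bar{x}=(x_1,\dots,x_n)$ is $t(\bar x)=s(\bar x)$ with $t,s$ terms of $\mathcal{L}$; a system of equations is any (possibly infinite) set of such equations, and its solution set is the set of tuples in $A^n$ satisfying all of them. $\mathcal{A}$ is equationally Noetherian if for every $n$ every system of equations in $n$ variables is equivalent over $\mathcal{A}$ (has the same solution set) to some finite subsystem of it. *)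

(* Defs.v *)
From Stdlib Require List.
From mathcomp Require Import all_boot.
Set Implicit Arguments. Unset Strict Implicit. Unset Printing Implicit Defensive.

(* An Ershov algebra <A; join, meet, diff, zero>: a distributive lattice
   with least element zero, and diff b a the relative complement
   (z /\ a = 0 and z \/ a = a \/ b). *)
Record ershov_algebra (A : Type) := ErshovAlgebra {
  ejoin : A -> A -> A;
  emeet : A -> A -> A;
  ediff : A -> A -> A;
  ezero : A;
  ejoinA : forall x y z, ejoin x (ejoin y z) = ejoin (ejoin x y) z;
  ejoinC : forall x y, ejoin x y = ejoin y x;
  emeetA : forall x y z, emeet x (emeet y z) = emeet (emeet x y) z;
  emeetC : forall x y, emeet x y = emeet y x;
  ejoinKI : forall x y, ejoin x (emeet x y) = x;
  emeetKU : forall x y, emeet x (ejoin x y) = x;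
  emeetUr : forall x y z, emeet x (ejoin y z) = ejoin (emeet x y) (emeet x z);
  ejoin0x : forall x, ejoin ezero x = x;
  ediff_meet : forall a b, emeet (ediff b a) a = ezero;
  ediff_join : forall a b, ejoin (ediff b a) a = ejoin a b
}.

Definition subalgebra A (E : ershov_algebra A) (C : A -> Prop) : Prop :=
  [/\ C (ezero E),
      (forall x y, C x -> C y -> C (ejoin E x y)),
      (forall x y, C x -> C y -> C (emeet E x y)) &
      (forall x y, C x -> C y -> C (ediff E x y))].

Inductive term A (C : A -> Prop) (n : nat) : Type :=
  | Tvar : 'I_n -> term C n
  | Tconst : {c : A | C c} -> term C n
  | Tzero : term C n
  | Tjoin : term C n -> term C n -> term C n
  | Tmeet : term C n -> term C n -> term C n
  | Tdiff : term C n -> term C n -> term C n.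

Fixpoint teval A (E : ershov_algebra A) (C : A -> Prop) n
    (v : 'I_n -> A) (t : term C n) : A :=
  match t with
  | Tvar i => v i
  | Tconst c => proj1_sig c
  | Tzero => ezero E
  | Tjoin t1 t2 => ejoin E (teval E v t1) (teval E v t2)
  | Tmeet t1 t2 => emeet E (teval E v t1) (teval E v t2)
  | Tdiff t1 t2 => ediff E (teval E v t1) (teval E v t2)
  end.

Definition equation A (C : A -> Prop) n := (term C n * term C n)%type.
Definition system A (C : A -> Prop) n := equation C n -> Prop.

Definition satisfies A (E : ershov_algebra A) (C : A -> Prop) n
    (v : 'I_n -> A) (e : equation C n) : Prop :=
  teval E v e.1 = teval E v e.2.

Definition equationally_noetherian A (E : ershov_algebra A) (C : A -> Prop)
  : Prop :=
  forall (n : nat) (S : system C n),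
    exists l : list (equation C n),
      (forall e, List.In e l -> S e) /\
      (forall v : 'I_n -> A,
         (forall e, S e -> satisfies E v e) <->
         (forall e, List.In e l -> satisfies E v e)).

Definition finite_set A (C : A -> Prop) : Prop :=
  exists l : list A, forall x, C x -> List.In x l.

(* Main.v *)
Require Import Defs.
From mathcomp Require Import all_boot.
From Stdlib Require Import Classical ClassicalEpsilon.
Set Implicit Arguments. Unset Strict Implicit. Unset Printing Implicit Defensive.

Section Lat.
Variable A : Type.
Variable E : ershov_algebra A.
Local Notation J := (ejoin E).
Local Notation M := (emeet E).
Local Notation D := (ediff E).
Local Notation Z := (ezero E).
Definition le x y := M x y = x.

Lemma joinxx x : J x x = x.
Proof. by rewrite -{2}(emeetKU E x x) ejoinKI. Qed.
Lemma meetxx x : M x x = x.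
Proof. by rewrite -{2}(ejoinKI E x x) emeetKU. Qed.
Lemma joinx0 x : J x Z = x.
Proof. by rewrite ejoinC ejoin0x. Qed.
Lemma meet0x x : M Z x = Z.
Proof. by rewrite -{1}(ejoin0x E x) emeetKU. Qed.
Lemma meetx0 x : M x Z = Z.
Proof. by rewrite emeetC meet0x. Qed.
Lemma meetUl x y z : M (J y z) x = J (M y x) (M z x).
Proof. by rewrite emeetC emeetUr (emeetC E x y) (emeetC E x z). Qed.
Lemma leJ x y : le x y -> J x y = y.
Proof. by rewrite /le => <-; rewrite ejoinC emeetC ejoinKI. Qed.
Lemma Jle x y : J x y = y -> le x y.
Proof. by rewrite /le => <-; rewrite emeetKU. Qed.
Lemma le_refl x : le x x.
Proof. exact: meetxx. Qed.
Lemma le_trans x y z : le x y -> le y z -> le x z.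
Proof. rewrite /le => h1 h2. by rewrite -h1 -emeetA h2. Qed.
Lemma le_anti x y : le x y -> le y x -> x = y.
Proof. rewrite /le => h1 h2. by rewrite -h1 emeetC h2. Qed.
Lemma le_meetl x y : le (M x y) x.
Proof. by rewrite /le emeetC emeetA meetxx. Qed.
Lemma le_meetr x y : le (M x y) y.
Proof. by rewrite /le -emeetA meetxx. Qed.
Lemma le_joinl x y : le x (J x y).
Proof. exact: emeetKU. Qed.
Lemma le_joinr x y : le y (J x y).
Proof. by rewrite ejoinC; apply: le_joinl. Qed.
Lemma le_join x y z : le x z -> le y z -> le (J x y) z.
Proof. move=> /leJ h1 /leJ h2; apply: Jle. by rewrite -ejoinA h2 h1. Qed.
Lemma le_meet x y z : le z x -> le z y -> le z (M x y).
Proof. rewrite /le => h1 h2. by rewrite emeetA h1 h2. Qed.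
Lemma le0 x : le Z x.
Proof. exact: meet0x. Qed.
Lemma le_diff b a : le (D b a) b.
Proof.
rewrite /le; symmetry.
by rewrite -{1}(emeetKU E (D b a) a) ediff_join emeetUr ediff_meet ejoin0x.
Qed.
Lemma diff_uniq z a b : M z a = Z -> J z a = J a b -> z = D b a.
Proof.
move=> h1 h2.
have e1 : z = M z (D b a).
  by rewrite -{1}(emeetKU E z a) h2 -(ediff_join E) emeetUr h1 joinx0.
have e2 : D b a = M (D b a) z.
  by rewrite -{1}(emeetKU E (D b a) a) ediff_join -h2 emeetUr ediff_meet joinx0.
by rewrite e1 {2}e2 emeetC.
Qed.
Lemma joinI a b c d : J (J a b) (J c d) = J (J a c) (J b d).
Proof. by rewrite -!ejoinA (ejoinA E b c d) (ejoinC E b c) -ejoinA. Qed.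
Lemma meetI a b c d : M (M a b) (M c d) = M (M a c) (M b d).
Proof. by rewrite -!emeetA (emeetA E b c d) (emeetC E b c) -emeetA. Qed.
Lemma le_foldr s k : k < size s -> le (nth Z s k) (foldr J Z s).
Proof.
elim: s k => [|x s IH] [|k] //= h.
  exact: le_joinl.
apply: le_trans (IH k h) _; exact: le_joinr.
Qed.

Variable w : A.
Fixpoint Jf (gs : seq A) (P : seq bool -> bool) : A :=
  match gs with
  | [::] => if P [::] then w else Z
  | g :: gs' => J (M g (Jf gs' (fun bs => P (true :: bs))))
                  (M (D w g) (Jf gs' (fun bs => P (false :: bs))))
  end.

Lemma Jf_ext gs P Q : (forall bs, size bs = size gs -> P bs = Q bs) -> Jf gs P = Jf gs Q.
Proof.
elim: gs P Q => [|g gs IH] P Q h /=; first by rewrite h.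
rewrite (IH (fun bs => P (true :: bs)) (fun bs => Q (true :: bs))); last by move=> bs hb; apply: h; rewrite /= hb.
by rewrite (IH (fun bs => P (false :: bs)) (fun bs => Q (false :: bs))) // => bs hb; apply: h; rewrite /= hb.
Qed.

Lemma Jf0 gs : Jf gs (fun _ => false) = Z.
Proof. elim: gs => [|g gs IH] //=. by rewrite IH !meetx0 joinx0. Qed.

Lemma Jf_or gs P Q : Jf gs (fun bs => P bs || Q bs) = J (Jf gs P) (Jf gs Q).
Proof.
elim: gs P Q => [|g gs IH] P Q /=.
  by case: (P [::]); case: (Q [::]); rewrite ?joinxx ?joinx0 ?ejoin0x.
rewrite (IH (fun bs => P (true :: bs))) (IH (fun bs => P (false :: bs))).
by rewrite joinI -!emeetUr.
Qed.

Lemma Jf_and gs P Q : Jf gs (fun bs => P bs && Q bs) = M (Jf gs P) (Jf gs Q).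
Proof.
elim: gs P Q => [|g gs IH] P Q /=.
  by case: (P [::]); case: (Q [::]); rewrite ?meetxx ?meetx0 ?meet0x.
rewrite (IH (fun bs => P (true :: bs))) (IH (fun bs => P (false :: bs))).
set X1 := Jf gs _; set Y1 := Jf gs _; set X2 := Jf gs _; set Y2 := Jf gs _.
have gh : M g (D w g) = Z by rewrite emeetC ediff_meet.
rewrite emeetUr !meetUl (meetI g X1 g Y1) (meetI (D w g) X2 g Y1) (meetI g X1 (D w g) Y2).
rewrite (meetI (D w g) X2 (D w g) Y2) !meetxx gh (emeetC E (D w g) g) gh !meet0x.
by rewrite joinx0 ejoin0x.
Qed.

Lemma Jf_diff gs P Q : Jf gs (fun bs => P bs && ~~ Q bs) = D (Jf gs P) (Jf gs Q).
Proof.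
apply: diff_uniq.
  rewrite -Jf_and -(Jf0 gs); apply: Jf_ext => bs _. by case: (P bs); case: (Q bs).
rewrite -!Jf_or; apply: Jf_ext => bs _. by case: (P bs); case: (Q bs).
Qed.

Lemma Jf1 gs : (forall k, k < size gs -> le (nth Z gs k) w) -> Jf gs (fun _ => true) = w.
Proof.
elim: gs => [|g gs IH] //= Hg.
rewrite IH; last by move=> k hk; apply: (Hg k.+1).
have := Hg 0 isT; rewrite /le /= => ->.
have := le_diff w g; rewrite /le => ->.
by rewrite ejoinC ediff_join; apply: leJ; apply: (Hg 0).
Qed.

Lemma Jf_nth gs j : (forall k, k < size gs -> le (nth Z gs k) w) -> j < size gs ->
  Jf gs (fun bs => nth false bs j) = nth Z gs j.
Proof.
elim: gs j => [|g gs IH] //= j Hg hj.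
have Hg' : forall k, k < size gs -> le (nth Z gs k) w by move=> k hk; apply: (Hg k.+1).
case: j hj => [|j] hj /=.
  rewrite Jf1 // Jf0 meetx0 joinx0. exact: (Hg 0).
rewrite IH // -meetUl ejoinC ediff_join (leJ (Hg 0 isT)).
by rewrite emeetC; apply: (Hg j.+1).
Qed.
End Lat.

Section Dir1.
Variable A : Type.
Variable E : ershov_algebra A.
Variable C : A -> Prop.
Variable l : list A.
Hypothesis HC : forall x, C x -> List.In x l.
Local Notation J := (ejoin E).
Local Notation Z := (ezero E).

Lemma In_nth' x s : List.In x s -> exists k, k < size s /\ nth Z s k = x.
Proof.
elim: s => [|y s IH] //= [->|h]; first by exists 0.
by case: (IH h) => k [hk hn]; exists k.+1.
Qed.

Definition cidx (c : {c | C c}) : nat :=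
  proj1_sig (constructive_indefinite_description _ (In_nth' (HC (proj2_sig c)))).
Lemma cidxP c : cidx c < size l /\ nth Z l (cidx c) = proj1_sig c.
Proof. rewrite /cidx; case: constructive_indefinite_description => k hk //. Qed.

Variable n : nat.
Fixpoint bval (t : term C n) : seq bool -> bool :=
  match t with
  | Tvar i => fun bs => nth false bs i
  | Tconst c => fun bs => nth false bs (n + cidx c)
  | Tzero => fun _ => false
  | Tjoin t1 t2 => fun bs => bval t1 bs || bval t2 bs
  | Tmeet t1 t2 => fun bs => bval t1 bs && bval t2 bs
  | Tdiff t1 t2 => fun bs => bval t1 bs && ~~ bval t2 bs
  end.

Definition gs (v : 'I_n -> A) := map v (enum 'I_n) ++ l.
Definition wv v := foldr J Z (gs v).
Lemma size_gs v : size (gs v) = n + size l.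
Proof. by rewrite /gs size_cat size_map size_enum_ord. Qed.
Lemma gs_le v k : k < size (gs v) -> le E (nth Z (gs v) k) (wv v).
Proof. exact: le_foldr. Qed.

Lemma teval_Jf v t : teval E v t = Jf E (wv v) (gs v) (bval t).
Proof.
elim: t => [i|c||t1 IH1 t2 IH2|t1 IH1 t2 IH2|t1 IH1 t2 IH2] /=.
- rewrite Jf_nth; last by rewrite size_gs ltn_addr.
    by rewrite /gs nth_cat size_map size_enum_ord ltn_ord (nth_map i) ?size_enum_ord // nth_ord_enum.
  exact: gs_le.
- have [h1 h2] := cidxP c.
  rewrite Jf_nth; last by rewrite size_gs ltn_add2l.
    by rewrite /gs nth_cat size_map size_enum_ord ltnNge leq_addr /= addKn h2.
  exact: gs_le.
- by rewrite Jf0.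
- by rewrite IH1 IH2 -Jf_or.
- by rewrite IH1 IH2 -Jf_and.
- by rewrite IH1 IH2 -Jf_diff.
Qed.

Definition kt (t : term C n) : {ffun (n + size l).-tuple bool -> bool} :=
  [ffun bs => bval t (tval bs)].

Lemma kt_eq t1 t2 v : kt t1 = kt t2 -> teval E v t1 = teval E v t2.
Proof.
move=> hk; rewrite !teval_Jf; apply: Jf_ext => bs hb.
rewrite size_gs in hb.
have hb' : size bs == n + size l by apply/eqP.
by move/ffunP: hk => /(_ (Tuple hb')); rewrite !ffunE.
Qed.

Definition ke (e : equation C n) := (kt e.1, kt e.2).

Lemma select (S : system C n) (ks : seq ({ffun (n + size l).-tuple bool -> bool} * {ffun (n + size l).-tuple bool -> bool})) :
  exists L : list (equation C n), (forall e, List.In e L -> S e) /\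
    forall e, S e -> ke e \in ks -> exists e', List.In e' L /\ ke e' = ke e.
Proof.
elim: ks => [|k ks [L [HL1 HL2]]]; first by exists nil; split.
case: (classic (exists e, S e /\ ke e = k)) => [[e0 [He0 hk]]|hn].
  exists (e0 :: L); split=> [e /= [<-|h]|e hS]; [by []|exact: HL1|].
  rewrite in_cons => /orP [/eqP ->|hin]; first by exists e0; split; [left|].
  by case: (HL2 e hS hin) => e' [h1 h2]; exists e'; split; [right|].
exists L; split=> // e hS; rewrite in_cons => /orP [/eqP hk|hin].
  by exfalso; apply: hn; exists e.
exact: HL2.
Qed.

Lemma dir1_EN : forall S : system C n,
    exists L : list (equation C n),
      (forall e, List.In e L -> S e) /\
      (forall v : 'I_n -> A,
         (forall e, S e -> satisfies E v e) <->
         (forall e, List.In e L -> satisfies E v e)).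
Proof.
move=> S; case: (select S (enum (@predT ({ffun (n + size l).-tuple bool -> bool} * {ffun (n + size l).-tuple bool -> bool})%type))) => L [H1 H2].
exists L; split=> // v; split=> h e he; first exact/h/H1.
case: (H2 e he); first by rewrite mem_enum.
move=> e' [hin hk]; have := h e' hin; rewrite /satisfies.
case: hk => hk1 hk2. by rewrite (kt_eq v hk1) (kt_eq v hk2).
Qed.
End Dir1.

Section Dir2.
Variable A : Type.
Variable E : ershov_algebra A.
Variable C : A -> Prop.
Hypothesis Hsub : subalgebra E C.
Hypothesis HEN : equationally_noetherian E C.
Local Notation J := (ejoin E).
Local Notation M := (emeet E).
Local Notation D := (ediff E).
Local Notation Z := (ezero E).

Lemma EN1 (T : {c | C c} -> Prop) (mk : {c | C c} -> equation C 1) :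
  exists F : list {c | C c}, (forall c, List.In c F -> T c) /\
   forall v, (forall c, List.In c F -> satisfies E v (mk c)) ->
     forall c, T c -> satisfies E v (mk c).
Proof.
case: (HEN (fun e => exists c, T c /\ e = mk c)) => L [HL1 HL2].
have : exists F : list {c | C c}, (forall c, List.In c F -> T c) /\
   forall e, List.In e L -> exists c, List.In c F /\ e = mk c.
  elim: L HL1 {HL2} => [|e L IH] HL1; first by exists nil.
  case: IH => [e' he'|F [HF1 HF2]]; first by apply: HL1; right.
  case: (HL1 e (or_introl erefl)) => c [Tc ->].
  exists (c :: F); split=> [c' /= [<-|h]|e' /= [<-|h]]; [by []|exact: HF1| |].
    by exists c; split; [left|].
  by case: (HF2 e' h) => c' [h1 h2]; exists c'; split; [right|].
case=> F [HF1 HF2]; exists F; split=> // v hv c Tc.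
have : forall e, List.In e L -> satisfies E v e.
  by move=> e /HF2 [c' [h1 ->]]; apply: hv.
by move/(HL2 v) => h; apply: h; exists c.
Qed.

Definition mkge (c : {c | C c}) : equation C 1 :=
  (Tmeet (Tvar C ord0) (Tconst 1 c), Tconst 1 c).
Definition mkle (c : {c | C c}) : equation C 1 :=
  (Tmeet (Tvar C ord0) (Tconst 1 c), Tvar C ord0).

Definition fin_down d := exists L : list A, forall z, C z -> le E z d -> List.In z L.

Lemma le_foldrIn x s : List.In x s -> le E x (foldr J Z s).
Proof.
elim: s => [|y s IH] //= [->|h]; first exact: le_joinl.
apply: le_trans (IH h) _; exact: le_joinr.
Qed.

Lemma C_foldr s : (forall x, List.In x s -> C x) -> C (foldr J Z s).
Proof.
case: Hsub => H0 HJ _ _.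
elim: s => [|y s IH] //= h. apply: HJ; first by apply: h; left.
by apply: IH => x hx; apply: h; right.
Qed.

Lemma fin_down_foldr s : (forall x, List.In x s -> C x /\ fin_down x) -> fin_down (foldr J Z s).
Proof.
case: Hsub => H0 HJ HM _.
elim: s => [|y s IH] /= h.
  exists [:: Z] => z _ hz; left; by rewrite -hz meetx0.
have [Cy [Ly HLy]] := h y (or_introl erefl).
have [Ls HLs] := IH (fun x hx => h x (or_intror hx)).
have Cs : C (foldr J Z s) by apply: C_foldr => x hx; case: (h x (or_intror hx)).
exists (List.flat_map (fun a => List.map (fun b => J a b) Ls) Ly) => z Cz hz.
apply/List.in_flat_map; exists (M z y); split.
  by apply: HLy; [apply: HM | apply: le_meetr].
apply/List.in_map_iff; exists (M z (foldr J Z s)); split.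
  by rewrite -emeetUr; exact: hz.
by apply: HLs; [apply: HM | apply: le_meetr].
Qed.

Lemma dir2 : finite_set C.
Proof.
case: Hsub => H0 HJ HM HD.
pose T (c : {c | C c}) := fin_down (proj1_sig c).
case: (EN1 T mkge) => F [HF1 HF2].
set g := foldr J Z (map (@proj1_sig _ _) F).
have fdg : fin_down g.
  apply: fin_down_foldr => x /List.in_map_iff [c [<- hc]].
  by split; [exact: (proj2_sig c) | exact: HF1].
have Tg : forall c, T c -> le E (proj1_sig c) g.
  move=> c Tc.
  have hF : forall c', List.In c' F -> satisfies E (fun _ => g) (mkge c').
    move=> c' hc'; rewrite /satisfies /= emeetC; apply: le_foldrIn.
    by apply/List.in_map_iff; exists c'.
  have := HF2 (fun _ => g) hF c Tc; rewrite /satisfies /= => h.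
  by rewrite /le emeetC.
have Hall : forall c, C c -> le E c g.
  move=> c Cc; case: (classic (le E c g)) => // hn; exfalso.
  pose e := D c g.
  have Cg : C g.
    apply: C_foldr => x /List.in_map_iff [c' [<- _]]; exact: (proj2_sig c').
  have Ce : C e by rewrite /e; apply: HD.
  have e0 : e <> Z.
    move=> he; apply: hn; apply: Jle; have := ediff_join E g c.
    by rewrite -/e he ejoin0x ejoinC => <-.
  pose Q d := C d /\ d <> Z /\ le E d e.
  have step : forall d, Q d -> exists d', Q d' /\ le E d' d /\ d' <> d.
    move=> d [Cd [dn de]]; case: (classic (exists d', Q d' /\ le E d' d /\ d' <> d)) => // hn'; exfalso.
    have fd : fin_down d.
      exists [:: Z; d] => z Cz hz.
      case: (classic (z = Z)) => [->|z0]; first by left.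
      case: (classic (z = d)) => [->|zd]; first by right; left.
      exfalso; apply: hn'; exists z; split; last by [].
      by split; [|split; [|apply: le_trans hz de]].
    have dg := Tg (exist _ d Cd) fd; rewrite /= in dg.
    apply: dn; rewrite -de -dg -emeetA.
    by rewrite /e (emeetC E g) ediff_meet meetx0.
  have f0 : forall x : {d | Q d}, {y : {d | Q d} |
      le E (proj1_sig y) (proj1_sig x) /\ proj1_sig y <> proj1_sig x}.
    move=> [d hd].
    case: (constructive_indefinite_description _ (step d hd)) => d' [hQ [h1 h2]].
    by exists (exist _ d' hQ).
  pose f x := proj1_sig (f0 x).
  have Qe : Q e by split; [|split; [|apply: le_refl]].
  pose s k := iter k f (exist _ e Qe).
  have chain : forall k m, k <= m -> le E (proj1_sig (s m)) (proj1_sig (s k)).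
    move=> k m /subnK <-; elim: (m - k) => [|i IH]; first exact: le_refl.
    rewrite addSn /s iterS -/(s (i + k)).
    apply: le_trans IH; exact: (proj2_sig (f0 (s (i + k)))).1.
  pose T2 (c : {c | C c}) := exists k, proj1_sig c = proj1_sig (s k).
  case: (EN1 T2 mkle) => F2 [HF21 HF22].
  have [m Hm] : exists m, forall c, List.In c F2 ->
      exists k, k <= m /\ proj1_sig c = proj1_sig (s k).
    elim: F2 HF21 {HF22} => [|c1 F2' IH] H; first by exists 0.
    case: IH => [c' hc'|m Hm]; first by apply: H; right.
    case: (H c1 (or_introl erefl)) => k0 hk0.
    exists (maxn k0 m) => c' /= [<-|hc'].
      by exists k0; split; [apply: leq_maxl|].
    case: (Hm c' hc') => k [hk hk']; exists k; split=> //.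
    exact: leq_trans hk (leq_maxr _ _).
  have Cs : forall k, C (proj1_sig (s k)) by move=> k; case: (proj2_sig (s k)).
  have hF : forall c1, List.In c1 F2 -> satisfies E (fun _ => proj1_sig (s m)) (mkle c1).
    move=> c1 hc; rewrite /satisfies /=.
    case: (Hm c1 hc) => k [hk ->]; exact: chain.
  have := HF22 (fun _ => proj1_sig (s m)) hF (exist _ (proj1_sig (s m.+1)) (Cs m.+1))
    (ex_intro _ m.+1 erefl).
  rewrite /satisfies /= => h.
  have [h1 h2] := proj2_sig (f0 (s m)).
  apply: h2; apply: le_anti; first exact: h1.
  exact: h.
case: fdg => L HL; exists L => x Cx; apply: HL => //; exact: Hall.
Qed.
End Dir2.

Theorem mainTheorem4 (A : Type) (E : ershov_algebra A) (C : A -> Prop) :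
  subalgebra E C ->
  (equationally_noetherian E C <-> finite_set C).
Proof.
move=> Hsub; split; first exact: dir2.
case=> l HC n S; exact: (dir1_EN E HC S).
Qed.
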